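(* Let $\mathbf{X}$ be a finitely supported real random variable with $\mathbf{E}[\mathbf{X}]=0$ and $\mathrm{Var}[\mathbf{X}]=1$. Let $q(x)$ be a multilinear polynomial over $\mathbb{R}^n$ of degree at most $d$ with $\mathrm{sparsity}(q)=T$. Then for $\mathbf{x}\sim\mathbf{X}^{\otimes n}$, the random variable $q(\mathbf{x})$ takes at least $\frac{1}{2d^2}\log(T)-3$ distinct output values.
   Context: A multilinear polynomial of degree at most $d$ is $q(x)=\sum_{|S|\le d}\widehat{q}(S)\prod_{i\in S}x_i$; $\mathrm{sparsity}(q)$ is its number of nonzero coefficients. $\log$ denotes the logarithm to base $2$. $\mathbf{X}^{\otimes n}$ is a vector of $n$ i.i.d. copies of $\mathbf{X}$. *)

(* Defs.v *)
From HB Require Import structures.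
From mathcomp Require Import all_boot all_order all_algebra.
From mathcomp Require Import all_classical all_reals all_analysis.
Set Implicit Arguments. Unset Strict Implicit. Unset Printing Implicit Defensive.
Import Order.TTheory GRing.Theory Num.Theory.
Local Open Scope ring_scope.

Definition mlpoly_eval (R : realType) (n : nat) (qhat : {ffun {set 'I_n} -> R})
  (x : 'I_n -> R) : R :=
  \sum_(S : {set 'I_n}) qhat S * \prod_(i in S) x i.

Definition mlpoly_deg_le (R : realType) (n : nat) (qhat : {ffun {set 'I_n} -> R})
  (d : nat) : Prop :=
  forall S : {set 'I_n}, (d < #|S|)%N -> qhat S = 0.

Definition sparsity (R : realType) (n : nat) (qhat : {ffun {set 'I_n} -> R}) : nat :=
  #|[set S : {set 'I_n} | qhat S != 0]|.

(* A finitely supported real random variable X: distinct atoms a : 'I_m -> R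
   with positive probabilities p : 'I_m -> R summing to 1. *)
Definition fin_distr (R : realType) (m : nat) (a : 'I_m -> R) (p : 'I_m -> R) : Prop :=
  injective a /\ (forall j, 0 < p j) /\ \sum_(j < m) p j = 1.

Definition fmean (R : realType) (m : nat) (a p : 'I_m -> R) : R :=
  \sum_(j < m) p j * a j.
Definition fvar (R : realType) (m : nat) (a p : 'I_m -> R) : R :=
  \sum_(j < m) p j * (a j - fmean a p) ^+ 2.

(* Number of distinct values taken (with positive probability) by q(x),
   x ~ X^{(x)n}: the support of X^{(x)n} is the set of vectors with entries
   among the atoms, i.e. (fun i => a (f i)) for f : {ffun 'I_n -> 'I_m}. *)
Definition num_values (R : realType) (n m : nat) (a : 'I_m -> R)
  (qhat : {ffun {set 'I_n} -> R}) : nat :=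
  size (undup [seq mlpoly_eval qhat (fun i => a (f i)) | f : {ffun 'I_n -> 'I_m}]).

Definition log2 (R : realType) (x : R) : R := ln x / ln 2.

(* Main.v *)
Require Import Defs.
From HB Require Import structures.
From mathcomp Require Import all_boot all_order all_algebra.
From mathcomp Require Import all_classical all_reals all_analysis.
From mathcomp Require Import zify ring lra.
Import Order.TTheory GRing.Theory Num.Theory.
Local Open Scope ring_scope.



Definition esg (R : realType) (n : nat) (S : {set 'I_n}) (i : 'I_n) : R :=
  if i \in S then -1 else 1.
Definition chi (R : realType) (n : nat) (T S : {set 'I_n}) : R :=
  \prod_(i in T :&: S) (-1 : R).
Arguments esg R {n}.
Arguments chi R {n}.

Lemma chiC (R : realType) n (T S : {set 'I_n}) : chi R T S = chi R S T.
Proof. by rewrite /chi finset.setIC. Qed.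

Lemma chiE (R : realType) n (T S : {set 'I_n}) :
  chi R T S = \prod_(i in T) esg R S i.
Proof.
rewrite /chi /esg -big_mkcondr /=; apply: eq_bigl => i; by rewrite inE.
Qed.

Lemma chiE2 (R : realType) n (T S : {set 'I_n}) :
  chi R T S = \prod_i (if i \in S then esg R T i else 1).
Proof. by rewrite chiC chiE big_mkcond. Qed.

Lemma sum_prod_distr (R : realType) n (A B : 'I_n -> R) :
  \sum_(S : {set 'I_n}) \prod_i (if i \in S then A i else B i)
  = \prod_i (A i + B i).
Proof. by rewrite bigA_distr. Qed.

Lemma esg_mul (R : realType) n (T U : {set 'I_n}) i :
  esg R T i * esg R U i = esg R ((T :\: U) :|: (U :\: T)) i.
Proof.
rewrite /esg !inE; case: (i \in T); case: (i \in U) => /=;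
  by rewrite ?mulN1r ?opprK ?mul1r ?mulr1.
Qed.

Lemma chi_mul (R : realType) n (T U S : {set 'I_n}) :
  chi R T S * chi R U S = chi R ((T :\: U) :|: (U :\: T)) S.
Proof.
rewrite !chiE2 -big_split /=; apply: eq_bigr => i _.
by case: (i \in S); rewrite ?mulr1 // esg_mul.
Qed.

Lemma chi_ortho (R : realType) n (T U : {set 'I_n}) :
  \sum_(S : {set 'I_n}) chi R T S * chi R U S = (T == U)%:R * 2 ^+ n.
Proof.
have -> : \sum_(S : {set 'I_n}) chi R T S * chi R U S =
   \sum_(S : {set 'I_n}) \prod_i (if i \in S then esg R T i * esg R U i else 1).
  apply: eq_bigr => S _; rewrite !chiE2 -big_split /=; apply: eq_bigr => i _.
  by case: (i \in S); rewrite ?mulr1.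
rewrite sum_prod_distr.
have [<-|neq] := eqVneq T U.
  rewrite mul1r (eq_bigr (fun _ => 2)) ?prodr_const ?card_ord // => i _.
  by rewrite /esg; case: (i \in T); rewrite ?mulN1r ?opprK ?mul1r.
rewrite mul0r.
case: (pickP (fun i => (i \in T) != (i \in U))) => [i Hi | H].
  rewrite (bigD1 i) //= /esg.
  by move: Hi; case: (i \in T); case: (i \in U) => //= _;
     rewrite ?mulN1r ?mulr1 ?mul1r addNr mul0r.
case/eqP: neq; apply/setP => i; move: (H i) => /= /negbT; by rewrite negbK => /eqP.
Qed.



Definition fc (R : realType) n (h : {set 'I_n} -> R) (T : {set 'I_n}) : R :=
  (2 ^+ n)^-1 * \sum_(S : {set 'I_n}) h S * chi R T S.
Arguments fc {R n}.

Lemma two_n_neq0 (R : realType) n : (2 ^+ n : R) != 0.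
Proof. by rewrite expf_neq0 // pnatr_eq0. Qed.

Lemma sum_ind (R : realType) n (W0 : {set 'I_n}) (f : {set 'I_n} -> R) :
  \sum_(W : {set 'I_n}) (W0 == W)%:R * f W = f W0.
Proof.
rewrite (bigD1 W0) //= eqxx mul1r big1 ?addr0 // => W /negbTE.
by rewrite eq_sym => ->; rewrite mul0r.
Qed.

Lemma fc_inv (R : realType) n (h : {set 'I_n} -> R) S :
  h S = \sum_T fc h T * chi R T S.
Proof.
rewrite /fc.
under eq_bigr => T _ do rewrite -mulrA mulr_suml.
rewrite -mulr_sumr exchange_big /=.
under eq_bigr => S' _ do under eq_bigr => T _ do rewrite -mulrA.
under eq_bigr => S' _ do rewrite -mulr_sumr.
under eq_bigr => S' _ do under eq_bigr => T _ do rewrite [chi R T S']chiC [chi R T S]chiC.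
under eq_bigr => S' _ do rewrite chi_ortho.
rewrite (bigD1 S) //= eqxx mul1r big1 ?addr0.
  by rewrite mulrCA mulVf ?mulr1 // two_n_neq0.
by move=> S' /negbTE ->; rewrite mul0r mulr0.
Qed.

Arguments fc_inv {R n}.

Lemma fc_uniq (R : realType) n (h : {set 'I_n} -> R) (c : {set 'I_n} -> R) :
  (forall S, h S = \sum_T c T * chi R T S) -> forall W, fc h W = c W.
Proof.
move=> hc W; rewrite /fc.
under eq_bigr => S _ do rewrite hc mulr_suml.
rewrite exchange_big /=.
under eq_bigr => T _ do under eq_bigr => S _ do rewrite -mulrA.
under eq_bigr => T _ do rewrite -mulr_sumr chi_ortho.
rewrite (bigD1 W) //= eqxx mul1r big1 ?addr0.
  by rewrite mulrCA mulVf ?mulr1 // two_n_neq0.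
by move=> T /negbTE ->; rewrite mul0r mulr0.
Qed.

Arguments fc_uniq {R n}.

Lemma parseval (R : realType) n (h : {set 'I_n} -> R) :
  \sum_T fc h T ^+ 2 = (2 ^+ n)^-1 * \sum_S h S ^+ 2.
Proof.
transitivity (\sum_T fc h T * ((2 ^+ n)^-1 * \sum_S h S * chi R T S)) => //.
under eq_bigr => T _ do rewrite mulrA (mulrC (fc h T)) -mulrA mulr_sumr.
rewrite -mulr_sumr exchange_big /=; congr (_ * _).
apply: eq_bigr => S _.
under eq_bigr => T _ do rewrite mulrCA.
by rewrite -mulr_sumr -fc_inv expr2.
Qed.

Definition lowdeg (R : realType) n (k : nat) (h : {set 'I_n} -> R) : Prop :=
  forall T : {set 'I_n}, (k < #|T|)%N -> fc h T = 0.
Arguments lowdeg {R n}.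

Lemma rep_lowdeg (R : realType) n k (h c : {set 'I_n} -> R) :
  (forall T : {set 'I_n}, (k < #|T|)%N -> c T = 0) ->
  (forall S, h S = \sum_T c T * chi R T S) -> lowdeg k h.
Proof. by move=> c0 hc T kT; rewrite (fc_uniq _ _ hc) c0. Qed.

Lemma lowdeg_mono (R : realType) n k1 k2 (h : {set 'I_n} -> R) :
  (k1 <= k2)%N -> lowdeg k1 h -> lowdeg k2 h.
Proof. by move=> le h1 T kT; apply: h1; apply: leq_ltn_trans kT. Qed.

Lemma lowdeg_ext (R : realType) n k (h1 h2 : {set 'I_n} -> R) :
  (forall S, h1 S = h2 S) -> lowdeg k h1 -> lowdeg k h2.
Proof.
move=> e l T kT; rewrite -(l T kT) /fc; congr (_ * _).
by apply: eq_bigr => S _; rewrite e.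
Qed.

Lemma chi0 (R : realType) n (S : {set 'I_n}) : chi R finset.set0 S = 1.
Proof. by rewrite /chi finset.set0I big_set0. Qed.

Lemma lowdeg_affine (R : realType) n k (h : {set 'I_n} -> R) al be :
  lowdeg k h -> lowdeg k (fun S => h S * al + be).
Proof.
move=> l.
apply: (@rep_lowdeg _ _ _ _ (fun T => fc h T * al + (T == finset.set0)%:R * be)).
  move=> T kT; rewrite l // mul0r add0r.
  have -> : (T == finset.set0) = false.
    by apply/negbTE; apply/eqP => T0; move: kT; rewrite T0 cards0.
  by rewrite mul0r.
move=> S; under eq_bigr => T _ do rewrite mulrDl.
rewrite big_split /= (fc_inv h S) mulr_suml; congr (_ + _).
  by apply: eq_bigr => T _; rewrite mulrAC.
rewrite (eq_bigr (fun T => (finset.set0 == T)%:R * (be * chi R T S))).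
  by rewrite sum_ind chi0 mulr1.
by move=> T _; rewrite eq_sym mulrA.
Qed.

Lemma lowdeg_const (R : realType) n (be : R) : lowdeg 0 (fun _ : {set 'I_n} => be).
Proof.
apply: (@rep_lowdeg _ _ _ _ (fun T => (T == finset.set0)%:R * be)).
  move=> T kT; have -> : (T == finset.set0) = false.
    by apply/negbTE; apply/eqP => T0; move: kT; rewrite T0 cards0.
  by rewrite mul0r.
move=> S; rewrite (eq_bigr (fun T => (finset.set0 == T)%:R * (be * chi R T S))).
  by rewrite sum_ind chi0 mulr1.
by move=> T _; rewrite eq_sym mulrA.
Qed.



Definition sdiff n (T U : {set 'I_n}) := (T :\: U) :|: (U :\: T).
Arguments sdiff {n}.

Lemma card_sdiff n (T U : {set 'I_n}) : (#|sdiff T U| <= #|T| + #|U|)%N.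
Proof.
rewrite -cardsUI; apply: leq_trans (leq_addr _ _).
apply: subset_leq_card; apply/fintype.subsetP => i; rewrite /sdiff !inE.
by case: (i \in T); case: (i \in U).
Qed.

Lemma lowdeg_mul (R : realType) n k1 k2 (h1 h2 : {set 'I_n} -> R) :
  lowdeg k1 h1 -> lowdeg k2 h2 -> lowdeg (k1 + k2) (fun S => h1 S * h2 S).
Proof.
move=> l1 l2.
apply: (@rep_lowdeg _ _ _ _ (fun W => \sum_T \sum_U
          (sdiff T U == W)%:R * (fc h1 T * fc h2 U))).
  move=> W kW; apply: big1 => T _; apply: big1 => U _.
  have [/eqP e|] := boolP (sdiff T U == W); last by rewrite mul0r.
  have [t1|t1] := leqP #|T| k1; last by rewrite l1 // mul0r mulr0.
  have [t2|t2] := leqP #|U| k2; last by rewrite l2 // mulr0 mulr0.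
  exfalso; have := card_sdiff _ T U; rewrite e => h.
  move: kW; rewrite ltnNge => /negP; apply; apply: leq_trans h _.
  exact: leq_add.
move=> S.
rewrite (fc_inv h1 S) (fc_inv h2 S) mulr_suml.
under eq_bigr => T _ do rewrite mulr_sumr.
under [RHS]eq_bigr => W _ do rewrite mulr_suml.
rewrite [RHS]exchange_big /=; apply: eq_bigr => T _.
under [RHS]eq_bigr => W _ do rewrite mulr_suml.
rewrite [RHS]exchange_big /=; apply: eq_bigr => U _.
rewrite mulrACA chi_mul.
under [RHS]eq_bigr => W _ do rewrite mulrAC -mulrA.
by rewrite sum_ind mulrC /sdiff.
Qed.



Lemma lowdeg_prod (R : realType) n d (G : {set 'I_n} -> R) (s : seq R) (al be : R -> R) :
  lowdeg d G -> lowdeg (d * size s) (fun S => \prod_(v <- s) (G S * al v + be v)).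
Proof.
move=> lG; elim: s => [|v s IH] /=.
  rewrite muln0; apply: (@lowdeg_ext _ _ _ (fun _ => 1)); last exact: lowdeg_const.
  by move=> S; rewrite big_nil.
rewrite mulnS; apply: (@lowdeg_ext _ _ _ (fun S => (G S * al v + be v) *
   \prod_(v <- s) (G S * al v + be v))); first by move=> S; rewrite big_cons.
by apply: lowdeg_mul => //; apply: lowdeg_affine.
Qed.

Lemma fin_diff (R : realType) n (T U : {set 'I_n}) :
  \sum_(S : {set 'I_n}) (S \subset U)%:R * (-1) ^+ #|S| * chi R T S
  = (U \subset T)%:R * 2 ^+ #|U|.
Proof.
have -> : \sum_(S : {set 'I_n}) (S \subset U)%:R * (-1) ^+ #|S| * chi R T S =
   \sum_(S : {set 'I_n}) \prod_i (if i \in S then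
        (if i \in U then - esg R T i else 0) else 1).
  apply: eq_bigr => S _.
  have [sSU|nsSU] := boolP (S \subset U).
    rewrite mul1r chiC chiE -prodrN -big_mkcond /=; apply: eq_bigr => i iS.
    by rewrite (fintype.subsetP sSU i iS).
  rewrite mul0r mul0r; case/fintype.subsetPn: nsSU => i iS iU.
  by rewrite (bigD1 i) //= iS (negbTE iU) mul0r.
rewrite sum_prod_distr.
have [sUT|nsUT] := boolP (U \subset T).
  rewrite mul1r -prodr_const [RHS]big_mkcond /=; apply: eq_bigr => i _.
  case: ifP => iU //; last by rewrite add0r.
  by rewrite /esg (fintype.subsetP sUT i iU) opprK.
rewrite mul0r; case/fintype.subsetPn: nsUT => i iU iT.
by rewrite (bigD1 i) //= iU /esg (negbTE iT) addNr mul0r.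
Qed.

Lemma gran (R : realType) n k (h : {set 'I_n} -> R) :
  (forall S, h S \is a Num.int) -> lowdeg k h ->
  forall T, 2 ^+ k * fc h T \is a Num.int.
Proof.
move=> hint lh.
suff H : forall j (T : {set 'I_n}), (k - #|T| < j)%N -> 2 ^+ k * fc h T \is a Num.int.
  by move=> T; apply: (H (k - #|T|).+1).
elim=> [//|j IH] T hj.
have [kT|Tk] := ltnP k #|T|; first by rewrite lh // mulr0 rpred0.
have key : (2 ^+ (k - #|T|)) * \sum_(S : {set 'I_n}) (S \subset T)%:R * (-1) ^+ #|S| * h S
   = \sum_(W : {set 'I_n}) (T \subset W)%:R * (2 ^+ k * fc h W).
  transitivity ((2 ^+ (k - #|T|)) * \sum_(W : {set 'I_n}) fc h W * ((T \subset W)%:R * 2 ^+ #|T|)).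
    congr (_ * _).
    under eq_bigr => S _ do rewrite (fc_inv h S) mulr_sumr.
    rewrite exchange_big /=; apply: eq_bigr => W _.
    rewrite -fin_diff mulr_sumr; apply: eq_bigr => S _.
    by rewrite mulrCA mulrA.
  rewrite mulr_sumr; apply: eq_bigr => W _.
  by rewrite -[in RHS](subnK Tk) exprD; ring.
have : 2 ^+ k * fc h T = (2 ^+ (k - #|T|)) * \sum_(S : {set 'I_n}) (S \subset T)%:R * (-1) ^+ #|S| * h S
   - \sum_(W : {set 'I_n} | W != T) (T \subset W)%:R * (2 ^+ k * fc h W).
  by rewrite key (bigD1 T) //= subxx mul1r addrK.
move=> ->; apply: rpredB.
  apply: rpredM; first by apply: rpredX; exact: natr_int.
  apply: rpred_sum => S _; apply: rpredM; last exact: hint.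
  by apply: rpredM; [apply: natr_int | apply: rpredX; rewrite rpredN; exact: rpred1].
apply: rpred_sum => W WT.
have [sTW|] := boolP (T \subset W); last by rewrite mul0r rpred0.
rewrite mul1r; have [kW|Wk] := ltnP k #|W|; first by rewrite lh // mulr0 rpred0.
apply: IH.
have : (#|T| < #|W|)%N by apply: proper_card; rewrite finset.properEneq eq_sym WT.
lia.
Qed.



Lemma expand (R : realType) n (u w : R) (U S : {set 'I_n}) :
  \prod_(i in U) (u + w * esg R S i) =
  \sum_(T : {set 'I_n}) ((T \subset U)%:R * (w ^+ #|T| * u ^+ (#|U| - #|T|))) * chi R T S.
Proof.
rewrite big_mkcond /=.
transitivity (\prod_i ((if i \in U then w * esg R S i else 0) + (if i \in U then u else 1))).
  by apply: eq_bigr => i _; case: (i \in U); rewrite ?addr0 ?add0r // addrC.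
rewrite -sum_prod_distr; apply: eq_bigr => T _.
have [sTU|nsTU] := boolP (T \subset U).
  rewrite mul1r (bigID (fun i => i \in T)) /=.
  transitivity (\prod_(i in T) (w * esg R S i) * \prod_(i in U :\: T) u).
    congr (_ * _).
      by apply: eq_bigr => i iT; rewrite iT (fintype.subsetP sTU i iT).
    rewrite [RHS]big_mkcond [LHS]big_mkcond /=; apply: eq_bigr => i _.
    by rewrite !inE; case: (i \in T); case: (i \in U).
  rewrite big_split /= !prodr_const -chiE cardsD (finset.setIidPr sTU).
  by rewrite mulrAC.
rewrite mul0r mul0r; case/fintype.subsetPn: nsTU => i iT iU.
by rewrite (bigD1 i) //= iT (negbTE iU) mul0r.
Qed.

Definition Fco (R : realType) n (qhat : {ffun {set 'I_n} -> R}) (u w : R) (T : {set 'I_n}) : R :=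
  \sum_(U : {set 'I_n}) qhat U * ((T \subset U)%:R * (w ^+ #|T| * u ^+ (#|U| - #|T|))).
Arguments Fco {R n}.

Lemma G_expand (R : realType) n (qhat : {ffun {set 'I_n} -> R}) (u w : R) (S : {set 'I_n}) :
  mlpoly_eval qhat (fun i => u + w * esg R S i) = \sum_T Fco qhat u w T * chi R T S.
Proof.
rewrite /mlpoly_eval /Fco.
under eq_bigr => U _ do rewrite expand mulr_sumr.
rewrite exchange_big /=; apply: eq_bigr => T _.
by rewrite mulr_suml; apply: eq_bigr => U _; rewrite mulrA.
Qed.

Lemma Fco_deg (R : realType) n (qhat : {ffun {set 'I_n} -> R}) (u w : R) d :
  mlpoly_deg_le qhat d -> forall T : {set 'I_n}, (d < #|T|)%N -> Fco qhat u w T = 0.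
Proof.
move=> dq T dT; apply: big1 => U _.
have [sTU|] := boolP (T \subset U); last by rewrite mul0r mulr0.
rewrite dq ?mul0r //; apply: leq_trans dT (subset_leq_card sTU).
Qed.

Lemma Fco_tri (R : realType) n (qhat : {ffun {set 'I_n} -> R}) (u w : R) :
  w != 0 -> forall S : {set 'I_n},
  (forall T : {set 'I_n}, S \subset T -> Fco qhat u w T = 0) -> qhat S = 0.
Proof.
move=> w0.
suff H : forall j (S : {set 'I_n}), (n - #|S| < j)%N ->
  (forall T : {set 'I_n}, S \subset T -> Fco qhat u w T = 0) -> qhat S = 0.
  by move=> S; apply: (H (n - #|S|).+1).
elim=> [//|j IH] S hj hF.
have := hF S (subxx _); rewrite /Fco (bigD1 S) //= subxx subnn expr0 mulr1 mul1r.
rewrite big1 ?addr0.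
  by move/eqP; rewrite mulf_eq0 expf_eq0 (negbTE w0) andbF orbF => /eqP.
move=> U US.
have [sSU|] := boolP (S \subset U); last by rewrite mul0r mulr0.
rewrite (IH U) ?mul0r //.
  have : (#|S| < #|U|)%N by apply: proper_card; rewrite finset.properEneq eq_sym US.
  have : (#|U| <= #|'I_n|)%N by apply: max_card.
  rewrite card_ord; lia.
by move=> T UT; apply: hF; exact: (fintype.subset_trans sSU UT).
Qed.



Lemma sum_ge_term (R : realType) (I : finType) (F : I -> R) i0 :
  (forall i, 0 <= F i) -> F i0 <= \sum_i F i.
Proof.
move=> h; rewrite (bigD1 i0) //= lerDl; apply: sumr_ge0 => i _; exact: h.
Qed.

Arguments sum_ge_term {R I}.

Lemma sum_ge_term_seq (R : realType) (s : seq R) (F : R -> R) v :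
  uniq s -> v \in s -> (forall i, 0 <= F i) -> F v <= \sum_(x <- s) F x.
Proof.
move=> us vs h; rewrite (bigD1_seq v) //= lerDl; apply: sumr_ge0 => i _; exact: h.
Qed.

Arguments sum_ge_term_seq {R s F v}.

Lemma sparsity_bound (R : realType) n d (qhat : {ffun {set 'I_n} -> R}) (u w : R)
  (vals : seq R) :
  w != 0 -> mlpoly_deg_le qhat d -> uniq vals ->
  (forall S, mlpoly_eval qhat (fun i => u + w * esg R S i) \in vals) ->
  (sparsity qhat)%:R <= 2 ^+ d * 4 ^+ (d * size vals) :> R.
Proof.
move=> w0 dq uv Gin.
set G := fun S : {set 'I_n} => mlpoly_eval qhat (fun i => u + w * esg R S i).
set D := (d * size vals)%N.
have lG : lowdeg d G.
  apply: (@rep_lowdeg _ _ _ _ (Fco qhat u w)); first exact: Fco_deg.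
  by move=> S; rewrite /G G_expand.
have fcG : forall T, fc G T = Fco qhat u w T.
  by apply: fc_uniq => S; rewrite /G G_expand.
set gv := fun (v : R) (S : {set 'I_n}) => ((G S == v)%:R : R).
have lgv : forall v, lowdeg D (gv v).
  move=> v; apply: (@lowdeg_mono _ _ (d * size [seq x <- vals | x != v])).
    by rewrite /D leq_mul2l size_filter count_size orbT.
  apply: (@lowdeg_ext _ _ _ (fun S => \prod_(v' <- [seq x <- vals | x != v])
     (G S * (fun v' => (v - v')^-1) v' + (fun v' => - v' * (v - v')^-1) v'))); last first.
    exact: lowdeg_prod.
  move=> S /=; rewrite /gv.
  have [->|ne] := eqVneq (G S) v.
    rewrite big1_seq //= => v'; rewrite mem_filter => /andP [nv _].
    by rewrite -mulrDl mulfV // subr_eq0 eq_sym.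
  have -> : (false%:R : R) = 0 by [].
  apply/esym/eqP; rewrite eq_sym prodf_seq_eq0; apply/hasP; exists (G S).
    by rewrite mem_filter ne Gin.
  by rewrite /= -mulrDl subrr mul0r.
have gint : forall v T, 2 ^+ D * fc (gv v) T \is a Num.int.
  by move=> v T; apply: (@gran R n D (gv v) _ (lgv v)) => S; exact: natr_int.
have Gdec : forall S, G S = \sum_(v <- vals) v * gv v S.
  move=> S; rewrite (bigD1_seq (G S)) ?Gin //= /gv /= eqxx mulr1 big1 ?addr0 // => v nv.
  by rewrite eq_sym (negbTE nv) mulr0.
have fcGdec : forall T, fc G T = \sum_(v <- vals) v * fc (gv v) T.
  move=> T; rewrite /fc.
  under eq_bigr => S _ do rewrite Gdec mulr_suml.
  rewrite exchange_big /= mulr_sumr; apply: eq_bigr => v _.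
  rewrite [RHS]mulrCA [in RHS]mulr_sumr; congr (_ * _); apply: eq_bigr => S _.
  by rewrite mulrA.
have e4 : (4 : R) = 2 ^+ 2 by rewrite expr2 -natrM.
have sum1 : \sum_(v <- vals) \sum_T fc (gv v) T ^+ 2 = 1.
  under eq_bigr => v _ do rewrite parseval.
  rewrite -mulr_sumr exchange_big /=.
  rewrite (eq_bigr (fun _ => 1)) => [|S _].
    rewrite sumr_const -cardsT -powersetT card_powerset cardsT card_ord natrX.
    by rewrite mulVf // two_n_neq0.
  rewrite (bigD1_seq (G S)) ?Gin //= /gv /= eqxx /= expr1n big1 ?addr0 // => v nv.
  by rewrite eq_sym (negbTE nv) /= expr2 mul0r.
have step1 : (sparsity qhat)%:R <= \sum_(S : {set 'I_n}) \sum_(T : {set 'I_n})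
      ((S \subset T)%:R * (Fco qhat u w T != 0)%:R) :> R.
  rewrite /sparsity -sumr_const big_mkcond /=; apply: ler_sum => S _; rewrite inE.
  case: ifP => nz; last by apply: sumr_ge0 => T _; apply: mulr_ge0; apply: ler0n.
  case: (pickP (fun T : {set 'I_n} => (S \subset T) && (Fco qhat u w T != 0))) => [T /andP [sT nT] | none].
    apply: le_trans (sum_ge_term _ T _); first by rewrite sT nT mulr1.
    by move=> T'; apply: mulr_ge0; apply: ler0n.
  exfalso; move/negP: nz; apply; apply/eqP; apply: (@Fco_tri R n qhat u w w0) => T sT.
  by move/negbT: (none T); rewrite sT /= negbK => /eqP.
have step2 : \sum_(S : {set 'I_n}) \sum_(T : {set 'I_n})
      ((S \subset T)%:R * (Fco qhat u w T != 0)%:R) <=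
      \sum_(T : {set 'I_n}) (Fco qhat u w T != 0)%:R * 2 ^+ d :> R.
  rewrite exchange_big /=; apply: ler_sum => T _.
  rewrite -mulr_suml.
  have -> : \sum_(S : {set 'I_n}) (S \subset T)%:R = 2 ^+ #|T| :> R.
    transitivity (\sum_(S in powerset T) (1 : R)).
      rewrite [RHS]big_mkcond /=; apply: eq_bigr => S _; by rewrite powersetE; case: (S \subset T).
    by rewrite sumr_const card_powerset natrX.
  have [nz|] := boolP (Fco qhat u w T != 0); last by rewrite mulr0 mul0r.
  rewrite mulr1 mul1r; apply: ler_weXn2l; first by rewrite ler1n.
  by rewrite leqNgt; apply/negP => dT; move/negP: nz; apply; apply/eqP; exact: (@Fco_deg R n qhat u w d dq T dT).
have step3 : forall T, (Fco qhat u w T != 0)%:R <=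
    \sum_(v <- vals) 4 ^+ D * fc (gv v) T ^+ 2 :> R.
  move=> T; have [nz|_] := boolP (Fco qhat u w T != 0); last first.
    by apply: sumr_ge0 => v _; apply: mulr_ge0; [apply: exprn_ge0 | apply: sqr_ge0].
  have : has (fun v => fc (gv v) T != 0) vals.
    apply/negPn/negP => /hasPn H; move/negP: nz; apply.
    rewrite -fcG fcGdec big1_seq // => v vin.
    by move/negbNE: (H v vin) => /eqP ->; rewrite mulr0.
  case/hasP => v vin nzv.
  apply: le_trans (sum_ge_term_seq uv vin _); last first.
    by move=> x; apply: mulr_ge0; [apply: exprn_ge0 | apply: sqr_ge0].
  have := sqr_intr_ge1 (gint v T) (mulf_neq0 (two_n_neq0 _ _) nzv).
  by rewrite exprMn -exprM mulnC exprM -e4.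
have step4 : \sum_(T : {set 'I_n}) \sum_(v <- vals) 4 ^+ D * fc (gv v) T ^+ 2 = 4 ^+ D :> R.
  rewrite exchange_big /=.
  under eq_bigr => v _ do rewrite -mulr_sumr.
  by rewrite -mulr_sumr sum1 mulr1.
apply: le_trans step1 _; apply: le_trans step2 _.
rewrite -mulr_suml mulrC; apply: ler_wpM2l; first exact: exprn_ge0.
by rewrite -step4; apply: ler_sum => T _; apply: step3.
Qed.



Lemma final_arith (R : realType) (d V K : nat) (lg : R) :
  lg <= K%:R -> K = (d + 2 * (d * V))%N -> (2 * d%:R ^+ 2)^-1 * lg - 3 <= V%:R.
Proof.
move=> hl eK; rewrite eK in hl.
have hV : (0 : R) <= V%:R by apply: ler0n.
have [->|dpos] := eqVneq d 0%N.
  rewrite expr0n /= mulr0 invr0 mul0r; lra.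
have hd : (1 : R) <= d%:R by rewrite ler1n lt0n.
have hpos : (0 : R) < 2 * d%:R ^+ 2.
  by apply: mulr_gt0; [lra | apply: exprn_gt0; lra].
have st : (2 * d%:R ^+ 2)^-1 * lg <= (2 * d%:R ^+ 2)^-1 * (d + 2 * (d * V))%:R.
  by apply: ler_wpM2l => //; rewrite invr_ge0 ltW.
suff st2 : (2 * d%:R ^+ 2)^-1 * (d + 2 * (d * V))%:R <= V%:R + 3 :> R by lra.
rewrite ler_pdivrMl // natrD natrM natrM.
set x := (d%:R : R) in hd *; set y := (V%:R : R) in hV *.
have h1 : x <= x ^+ 2 by rewrite expr2 -{1}[x]mulr1 ler_wpM2l //; lra.
have h2 : x * y <= x ^+ 2 * y by apply: ler_wpM2r.
have h3 : 0 <= x ^+ 2 by apply: sqr_ge0.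
rewrite [2%:R]/=.
lra.
Qed.

Theorem lemma6p2 (R : realType) (m : nat) (a p : 'I_m -> R)
  (n d : nat) (qhat : {ffun {set 'I_n} -> R}) :
  fin_distr a p -> fmean a p = 0 -> fvar a p = 1 ->
  mlpoly_deg_le qhat d ->
  (num_values a qhat)%:R >=
    (2 * (d%:R) ^+ 2)^-1 * log2 ((sparsity qhat)%:R : R) - 3.
Proof.
move=> [inj [pp sp]] mean var dq.
have m2 : (1 < m)%N.
  case: m a p inj pp sp mean var => [|[|m]] a p inj pp sp mean var //.
    by move: sp; rewrite big_ord0 => /eqP; rewrite eq_sym oner_eq0.
  move: var; rewrite /fvar /fmean big_ord1 big_ord1.
  move: sp; rewrite big_ord1 => ->; rewrite mul1r mul1r subrr expr2 mul0r => /eqP.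
  by rewrite eq_sym oner_eq0.
pose j0 : 'I_m := Ordinal (ltnW m2).
pose j1 : 'I_m := Ordinal m2.
have aneq : a j0 != a j1.
  by apply/negP => /eqP /inj /(congr1 val).
set u := (a j0 + a j1) / 2.
set w := (a j1 - a j0) / 2.
have w0 : w != 0.
  rewrite /w mulf_neq0 ?invr_eq0 ?pnatr_eq0 // subr_eq0 eq_sym; exact: aneq.
set vals := undup [seq mlpoly_eval qhat (fun i => a (f i)) | f : {ffun 'I_n -> 'I_m}].
have Gin : forall S, mlpoly_eval qhat (fun i => u + w * esg R S i) \in vals.
  move=> S; rewrite mem_undup.
  have -> : (fun i => u + w * esg R S i) =
     (fun i => a ([ffun i => if i \in S then j0 else j1] i)).
    apply: funext => i; rewrite ffunE /esg /u /w.
    by case: (i \in S); field.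
  by apply: map_f; rewrite mem_enum.
have hsp := @sparsity_bound R n d qhat u w vals w0 dq (undup_uniq _) Gin.
rewrite /num_values -/vals.
set V := size vals in hsp *.
set T := sparsity qhat in hsp *.
have e4 : (4 : R) = 2 ^+ 2 by rewrite expr2 -natrM.
pose K := (d + 2 * (d * V))%N.
have hK : (T%:R : R) <= 2 ^+ K by rewrite /K exprD exprM -e4.
have l2 : 0 < ln (2 : R) by apply: ln_gt0; rewrite ltr1n.
have hlog : log2 (T%:R : R) <= K%:R.
  rewrite /log2 ler_pdivrMr //.
  have [T0|Tpos] := eqVneq T 0%N.
    by rewrite T0 ln0 // mulr_ge0 // ltW.
  rewrite mulr_natl -lnXn; last by rewrite ltr0n.
  rewrite ler_ln // posrE.
    by rewrite ltr0n lt0n.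
  by apply: exprn_gt0; rewrite ltr0n.
exact: (@final_arith R d V K _ hlog erefl).
Qed.
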